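(* Let $\mathfrak A$ be a unital C$^*$-algebra with trivial centre and $\rho,\bar\rho$ conjugate endomorphisms of $\mathfrak A$, i.e. there are $R\in(\iota,\bar\rho\rho)$, $\bar R\in(\iota,\rho\bar\rho)$ with $R^*\bar\rho(\bar R)=1$ and $\bar R^*\rho(R)=1$. Then $\lambda=\rho\bar\rho$ is a canonical endomorphism of $\mathfrak A$ with respect to the subalgebra $\rho(\mathfrak A)$.
   Context: $(\rho,\sigma)=\{T\in\mathfrak A:T\rho(a)=\sigma(a)T\ \forall a\in\mathfrak A\}$. For a unital C$^*$-subalgebra $\mathfrak B\subset\mathfrak A$, an endomorphism $\lambda$ of $\mathfrak A$ with $\lambda(\mathfrak A)\subset\mathfrak B$ is canonical with respect to $\mathfrak B$ if there are $T\in(\iota,\lambda)$ (in $\mathfrak A$) and $S\in\mathfrak B$ with $Sb=\lambda(b)S$ for all $b\in\mathfrak B$, such that $S^*\lambda(T)\in\mathbb C\setminus\{0\}$ and $T^*S\in\mathbb C\setminus\{0\}$. *)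

(* Defs.v *)
From HB Require Import structures.
From mathcomp Require Import all_boot all_order all_algebra.
From mathcomp Require Import complex.
From mathcomp Require Import Rstruct.
From Stdlib Require Import Rdefinitions.

Set Implicit Arguments.
Unset Strict Implicit.
Unset Printing Implicit Defensive.
Import Order.TTheory GRing.Theory Num.Theory.

Local Open Scope ring_scope.

Definition Cx : Type := complex Rdefinitions.R.
Definition Cmod (z : Cx) : Rdefinitions.R := Normc.normc z.
Definition Cconj (z : Cx) : Cx := conjc z.

Record CStarAlgebra := {
  car :> Type;
  c0 : car; c1 : car;
  cadd : car -> car -> car;
  copp : car -> car;
  cmul : car -> car -> car;
  cscal : Cx -> car -> car;
  cstar : car -> car;
  cnorm : car -> Rdefinitions.R;
  caddA : forall x y z, cadd x (cadd y z) = cadd (cadd x y) z;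
  caddC : forall x y, cadd x y = cadd y x;
  cadd0 : forall x, cadd c0 x = x;
  caddN : forall x, cadd (copp x) x = c0;
  cscalA : forall (a b : Cx) x, cscal a (cscal b x) = cscal (a * b) x;
  cscal1 : forall x, cscal 1 x = x;
  cscalDr : forall (a : Cx) x y, cscal a (cadd x y) = cadd (cscal a x) (cscal a y);
  cscalDl : forall (a b : Cx) x, cscal (a + b) x = cadd (cscal a x) (cscal b x);
  cmulA : forall x y z, cmul x (cmul y z) = cmul (cmul x y) z;
  cmul1l : forall x, cmul c1 x = x;
  cmul1r : forall x, cmul x c1 = x;
  cmulDl : forall x y z, cmul (cadd x y) z = cadd (cmul x z) (cmul y z);
  cmulDr : forall x y z, cmul x (cadd y z) = cadd (cmul x y) (cmul x z);
  cscal_mull : forall (a : Cx) x y, cscal a (cmul x y) = cmul (cscal a x) y;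
  cscal_mulr : forall (a : Cx) x y, cscal a (cmul x y) = cmul x (cscal a y);
  cstarK : forall x, cstar (cstar x) = x;
  cstarD : forall x y, cstar (cadd x y) = cadd (cstar x) (cstar y);
  cstarZ : forall (a : Cx) x, cstar (cscal a x) = cscal (Cconj a) (cstar x);
  cstarM : forall x y, cstar (cmul x y) = cmul (cstar y) (cstar x);
  cnorm_ge0 : forall x, (0 <= cnorm x)%R;
  cnorm_eq0 : forall x, cnorm x = 0%R -> x = c0;
  cnormD : forall x y, (cnorm (cadd x y) <= cnorm x + cnorm y)%R;
  cnormZ : forall (a : Cx) x, cnorm (cscal a x) = (Cmod a * cnorm x)%R;
  cnormM : forall x y, (cnorm (cmul x y) <= cnorm x * cnorm y)%R;
  cnorm_cstar : forall x, cnorm (cmul (cstar x) x) = (cnorm x ^+ 2)%R;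
  ccomplete : forall u : nat -> car,
    (forall e : Rdefinitions.R, (0 < e)%R -> exists N : nat, forall m n : nat,
        leq N m -> leq N n -> (cnorm (cadd (u m) (copp (u n))) < e)%R) ->
    exists l : car, forall e : Rdefinitions.R, (0 < e)%R -> exists N : nat,
        forall n : nat, leq N n -> (cnorm (cadd (u n) (copp l)) < e)%R
}.

Arguments c0 {_}. Arguments c1 {_}.
Arguments cmul {_}. Arguments cadd {_}. Arguments cscal {_}.
Arguments cstar {_}. Arguments copp {_}.

Definition is_endo (A : CStarAlgebra) (f : A -> A) : Prop :=
  [/\ forall x y, f (cadd x y) = cadd (f x) (f y),
      forall (a : Cx) x, f (cscal a x) = cscal a (f x),
      forall x y, f (cmul x y) = cmul (f x) (f y),
      forall x, f (cstar x) = cstar (f x)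
    & f c1 = c1].

Definition trivial_centre (A : CStarAlgebra) : Prop :=
  forall z : A, (forall a : A, cmul z a = cmul a z) ->
    exists c : Cx, z = cscal c c1.

Definition intertwiner (A : CStarAlgebra) (rho sigma : A -> A) (T : A) : Prop :=
  forall a : A, cmul T (rho a) = cmul (sigma a) T.

Definition unital_star_subalgebra (A : CStarAlgebra) (B : A -> Prop) : Prop :=
  [/\ B c1,
      forall x y, B x -> B y -> B (cadd x y),
      forall (a : Cx) x, B x -> B (cscal a x),
      forall x y, B x -> B y -> B (cmul x y)
    & forall x, B x -> B (cstar x)].

Definition image_of (A : CStarAlgebra) (rho : A -> A) : A -> Prop :=
  fun x => exists a : A, x = rho a.

Definition canonical_wrt (A : CStarAlgebra) (B : A -> Prop) (lam : A -> A) : Prop :=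
  [/\ unital_star_subalgebra B,
      is_endo lam,
      forall a : A, B (lam a)
    & exists T S : A,
      [/\ intertwiner id lam T,
          B S,
          forall b : A, B b -> cmul S b = cmul (lam b) S,
          exists c : Cx, c != 0 /\ cmul (cstar S) (lam T) = cscal c c1
        & exists c : Cx, c != 0 /\ cmul (cstar T) S = cscal c c1]].

(* Main.v *)
Require Import Defs.
From mathcomp Require Import all_boot all_algebra.
From mathcomp Require Import complex Rstruct.
Import GRing.Theory.
Local Open Scope ring_scope.

Theorem propositionA3 (A : CStarAlgebra) (rho rhob : A -> A) :
  is_endo rho -> is_endo rhob -> trivial_centre A ->
  (exists R Rb : A,
      [/\ intertwiner id (fun a => rhob (rho a)) R,
          intertwiner id (fun a => rho (rhob a)) Rb,
          cmul (cstar R) (rhob Rb) = c1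
        & cmul (cstar Rb) (rho R) = c1]) ->
  canonical_wrt (image_of rho) (fun a => rho (rhob a)).
Proof.
move=> [rD rZ rM rS r1] [sD sZ sM sS s1] _ [R [Rb [HR HRb E1 E2]]].
have c10 : exists c : Cx, c != 0 /\ (@c1 A) = cscal c c1.
  by exists 1; split; [exact: (@oner_neq0 (complex Rdefinitions.R)) | rewrite cscal1].
split.
- split.
  + by exists c1; rewrite r1.
  + by move=> x y [a ->] [b ->]; exists (cadd a b); rewrite rD.
  + by move=> c x [a ->]; exists (cscal c a); rewrite rZ.
  + by move=> x y [a ->] [b ->]; exists (cmul a b); rewrite rM.
  + by move=> x [a ->]; exists (cstar a); rewrite rS.
- split.
  + by move=> x y; rewrite sD rD.
  + by move=> c x; rewrite sZ rZ.
  + by move=> x y; rewrite sM rM.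
  + by move=> x; rewrite sS rS.
  + by rewrite s1 r1.
- by move=> a; exists (rhob a).
exists Rb, (rho R); split.
- exact: HRb.
- by exists R.
- move=> b [a ->]; rewrite -!rM; congr rho; exact: HR.
- by rewrite -rS -rM E1 r1; exact: c10.
- by rewrite E2; exact: c10.
Qed.
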